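(* Let $A=(A,\mu,\eta,\Delta,\varepsilon,S)$ be an involutory Hopf algebra in a symmetric monoidal category $\mathcal{C}$ satisfying (A1): there are an invertible object $I$, a universal left integral $\Lambda\colon I\to A$ and a universal right cointegral $\lambda\colon A\to I$ with $\lambda\Lambda=\mathrm{id}_I$. Then the map $$\Psi\colon \mathrm{Hom}_{\mathcal{C}}(A\otimes A,I)\to\mathrm{Hom}_{\mathcal{C}}(A\otimes I,I\otimes A),\qquad \Psi(e)=(e\otimes\mathrm{id}_A)(\mathrm{id}_A\otimes\Delta\Lambda),$$ is injective.
   Context: $\mathcal{C}$ symmetric monoidal with unit $\mathbb{1}$, symmetry $\tau$, constraints suppressed. An object $I$ is invertible if $I\otimes J\cong\mathbb{1}$ for some $J$. Involutory Hopf algebra: bialgebra with invertible antipode $S$, $S^2=\mathrm{id}_A$. A left integral is $\Lambda\colon I\to A$ with $\mu(\mathrm{id}_A\otimes\Lambda)=\varepsilon\otimes\Lambda$; a right cointegral is $\lambda\colon A\to I$ with $(\lambda\otimes\mathrm{id}_A)\Delta=\lambda\otimes\eta$. $\Lambda$ is universal if every left integral $X\to A$ factors uniquely through $\Lambda$ via a morphism $X\to I$; $\lambda$ is universal if every right cointegral $A\to X$ factors uniquely as $g'\lambda$ with $g'\colon I\to X$. *)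

(* Defs.v *)
From Stdlib Require Import Utf8.

Record SymMonCat := {
  ob :> Type;
  hom : ob -> ob -> Type;
  idm : forall a, hom a a;
  comp : forall a b c, hom b c -> hom a b -> hom a c;
  comp_id_l : forall a b (f : hom a b), comp a b b (idm b) f = f;
  comp_id_r : forall a b (f : hom a b), comp a a b f (idm a) = f;
  comp_assoc : forall a b c d (f : hom a b) (g : hom b c) (h : hom c d),
      comp a c d h (comp a b c g f) = comp a b d (comp b c d h g) f;
  tens : ob -> ob -> ob;
  tensm : forall a b c d, hom a b -> hom c d -> hom (tens a c) (tens b d);
  tensm_id : forall a b, tensm a a b b (idm a) (idm b) = idm (tens a b);
  tensm_comp : forall a b c d e f (g : hom b c) (g' : hom a b)
      (h : hom e f) (h' : hom d e),
      tensm a c d f (comp a b c g g') (comp d e f h h')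
      = comp (tens a d) (tens b e) (tens c f) (tensm b c e f g h) (tensm a b d e g' h');
  unit : ob;
  assoc : forall a b c, hom (tens a (tens b c)) (tens (tens a b) c);
  assoc_inv : forall a b c, hom (tens (tens a b) c) (tens a (tens b c));
  assoc_inv_l : forall a b c,
      comp _ _ _ (assoc_inv a b c) (assoc a b c) = idm (tens a (tens b c));
  assoc_inv_r : forall a b c,
      comp _ _ _ (assoc a b c) (assoc_inv a b c) = idm (tens (tens a b) c);
  assoc_nat : forall a b c d e f (x : hom a b) (y : hom c d) (z : hom e f),
      comp _ _ _ (assoc b d f) (tensm _ _ _ _ x (tensm _ _ _ _ y z))
      = comp _ _ _ (tensm _ _ _ _ (tensm _ _ _ _ x y) z) (assoc a c e);
  lunit : forall a, hom (tens unit a) a;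
  lunit_inv : forall a, hom a (tens unit a);
  lunit_inv_l : forall a, comp _ _ _ (lunit_inv a) (lunit a) = idm (tens unit a);
  lunit_inv_r : forall a, comp _ _ _ (lunit a) (lunit_inv a) = idm a;
  lunit_nat : forall a b (x : hom a b),
      comp _ _ _ (lunit b) (tensm _ _ _ _ (idm unit) x) = comp _ _ _ x (lunit a);
  runit : forall a, hom (tens a unit) a;
  runit_inv : forall a, hom a (tens a unit);
  runit_inv_l : forall a, comp _ _ _ (runit_inv a) (runit a) = idm (tens a unit);
  runit_inv_r : forall a, comp _ _ _ (runit a) (runit_inv a) = idm a;
  runit_nat : forall a b (x : hom a b),
      comp _ _ _ (runit b) (tensm _ _ _ _ x (idm unit)) = comp _ _ _ x (runit a);
  sym : forall a b, hom (tens a b) (tens b a);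
  sym_invol : forall a b, comp _ _ _ (sym b a) (sym a b) = idm (tens a b);
  sym_nat : forall a b c d (x : hom a b) (y : hom c d),
      comp _ _ _ (sym b d) (tensm _ _ _ _ x y) = comp _ _ _ (tensm _ _ _ _ y x) (sym a c);
  pentagon : forall a b c d,
      comp _ _ _ (assoc (tens a b) c d) (assoc a b (tens c d))
      = comp _ _ _ (tensm _ _ _ _ (assoc a b c) (idm d))
          (comp _ _ _ (assoc a (tens b c) d) (tensm _ _ _ _ (idm a) (assoc b c d)));
  triangle : forall a b,
      comp _ _ _ (tensm _ _ _ _ (runit a) (idm b)) (assoc a unit b)
      = tensm _ _ _ _ (idm a) (lunit b);
  hexagon : forall a b c,
      sym a (tens b c)
      = comp _ _ _ (assoc b c a)
         (comp _ _ _ (tensm _ _ _ _ (idm b) (sym a c))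
          (comp _ _ _ (assoc_inv b a c)
           (comp _ _ _ (tensm _ _ _ _ (sym a b) (idm c)) (assoc a b c))))
}.

Arguments hom {s} a b.
Arguments idm {s} a.
Arguments comp {s a b c} g f.
Arguments tens {s} a b.
Arguments tensm {s a b c d} f g.
Arguments unit {s}.
Arguments assoc {s} a b c.
Arguments assoc_inv {s} a b c.
Arguments lunit {s} a.
Arguments lunit_inv {s} a.
Arguments runit {s} a.
Arguments runit_inv {s} a.
Arguments sym {s} a b.

Declare Scope cat_scope.
Delimit Scope cat_scope with cat.
Notation "g ∘ f" := (comp g f) (at level 40, left associativity) : cat_scope.
Notation "f ⊗ g" := (tensm f g) (at level 35, no associativity) : cat_scope.
Notation "a ⊠ b" := (tens a b) (at level 34, right associativity) : cat_scope.
Open Scope cat_scope.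

Section Hopf.
Context {C : SymMonCat}.

Definition mid (a b c d : C) : hom ((a ⊠ b) ⊠ (c ⊠ d)) ((a ⊠ c) ⊠ (b ⊠ d)) :=
  assoc a c (b ⊠ d) ∘ (idm a ⊗ assoc_inv c b d)
  ∘ (idm a ⊗ (sym b c ⊗ idm d)) ∘ (idm a ⊗ assoc b c d) ∘ assoc_inv a b (c ⊠ d).

Definition invertible_ob (I : C) : Prop :=
  exists (J : C) (f : hom (I ⊠ J) unit) (g : hom unit (I ⊠ J)),
    f ∘ g = idm unit /\ g ∘ f = idm (I ⊠ J).

Record IsHopfAlgebra (A : C) (mu : hom (A ⊠ A) A) (eta : hom unit A)
    (Delta : hom A (A ⊠ A)) (eps : hom A unit) (S : hom A A) : Prop := {
  hopf_mul_assoc : mu ∘ (mu ⊗ idm A) ∘ assoc A A A = mu ∘ (idm A ⊗ mu);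
  hopf_unit_l : mu ∘ (eta ⊗ idm A) = lunit A;
  hopf_unit_r : mu ∘ (idm A ⊗ eta) = runit A;
  hopf_coassoc : assoc A A A ∘ (idm A ⊗ Delta) ∘ Delta = (Delta ⊗ idm A) ∘ Delta;
  hopf_counit_l : lunit A ∘ (eps ⊗ idm A) ∘ Delta = idm A;
  hopf_counit_r : runit A ∘ (idm A ⊗ eps) ∘ Delta = idm A;
  hopf_bialg : Delta ∘ mu = (mu ⊗ mu) ∘ mid A A A A ∘ (Delta ⊗ Delta);
  hopf_eps_mul : eps ∘ mu = lunit unit ∘ (eps ⊗ eps);
  hopf_Delta_eta : Delta ∘ eta = (eta ⊗ eta) ∘ lunit_inv unit;
  hopf_eps_eta : eps ∘ eta = idm unit;
  hopf_antipode_l : mu ∘ (S ⊗ idm A) ∘ Delta = eta ∘ eps;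
  hopf_antipode_r : mu ∘ (idm A ⊗ S) ∘ Delta = eta ∘ eps
}.

Definition left_integral {A : C} (mu : hom (A ⊠ A) A) (eps : hom A unit)
    {X : C} (f : hom X A) : Prop :=
  mu ∘ (idm A ⊗ f) = lunit A ∘ (eps ⊗ f).

Definition right_cointegral {A : C} (Delta : hom A (A ⊠ A)) (eta : hom unit A)
    {X : C} (f : hom A X) : Prop :=
  (f ⊗ idm A) ∘ Delta = (f ⊗ eta) ∘ runit_inv A.

Definition universal_left_integral {A : C} (mu : hom (A ⊠ A) A)
    (eps : hom A unit) {I : C} (Lam : hom I A) : Prop :=
  left_integral mu eps Lam /\
  forall (X : C) (f : hom X A), left_integral mu eps f ->
    exists! g : hom X I, f = Lam ∘ g.

Definition universal_right_cointegral {A : C} (Delta : hom A (A ⊠ A))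
    (eta : hom unit A) {I : C} (lam : hom A I) : Prop :=
  right_cointegral Delta eta lam /\
  forall (X : C) (f : hom A X), right_cointegral Delta eta f ->
    exists! g : hom I X, f = g ∘ lam.

Definition Psi {A I : C} (Delta : hom A (A ⊠ A)) (Lam : hom I A)
    (e : hom (A ⊠ A) I) : hom (A ⊠ I) (I ⊠ A) :=
  (e ⊗ idm A) ∘ assoc A A A ∘ (idm A ⊗ (Delta ∘ Lam)).

End Hopf.

(* Main.v *)
Require Import Defs.
From Stdlib Require Import Setoid.


Arguments comp_id_l {s a b} f.
Arguments comp_id_r {s a b} f.
Arguments comp_assoc {s a b c d} f g h.
Arguments tensm_id {s} a b.
Arguments tensm_comp {s a b c d e f} g g' h h'.
Arguments assoc_inv_l {s} a b c.
Arguments assoc_inv_r {s} a b c.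
Arguments assoc_nat {s a b c d e f} x y z.
Arguments lunit_inv_l {s} a.
Arguments lunit_inv_r {s} a.
Arguments lunit_nat {s a b} x.
Arguments runit_inv_l {s} a.
Arguments runit_inv_r {s} a.
Arguments runit_nat {s a b} x.
Arguments sym_invol {s} a b.
Arguments sym_nat {s a b c d} x y.
Arguments pentagon {s} a b c d.
Arguments triangle {s} a b.
Arguments hexagon {s} a b c.

Lemma cA {C : SymMonCat} {a b c d : C} (f : hom a b) (g : hom b c) (h : hom c d) :
  h ∘ (g ∘ f) = h ∘ g ∘ f.
Proof. apply comp_assoc. Qed.

Lemma lc2 {C : SymMonCat} {b c d : C} {x : hom c d} {y : hom b c} {z : hom b d}
  (e : x ∘ y = z) : forall e0 (w : hom d e0), w ∘ x ∘ y = w ∘ z.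
Proof. intros. rewrite <- e, cA. reflexivity. Qed.

Lemma lc3 {C : SymMonCat} {b c d e : C} {x : hom d e} {y : hom c d} {u : hom b c}
  {z : hom b e} (E : x ∘ y ∘ u = z) : forall e0 (w : hom e e0), w ∘ x ∘ y ∘ u = w ∘ z.
Proof. intros. rewrite <- E, !cA. reflexivity. Qed.

Lemma tc {C : SymMonCat} {a b c d e f : C} (g : hom b c) (g' : hom a b) (h : hom e f) (h' : hom d e) :
  (g ∘ g') ⊗ (h ∘ h') = (g ⊗ h) ∘ (g' ⊗ h').
Proof. apply tensm_comp. Qed.

Lemma tsl {C : SymMonCat} {a b c d : C} (f : hom a b) (g : hom c d) :
  f ⊗ g = (f ⊗ idm d) ∘ (idm a ⊗ g).
Proof. rewrite <- tc, comp_id_l, comp_id_r. reflexivity. Qed.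

Lemma tsr {C : SymMonCat} {a b c d : C} (f : hom a b) (g : hom c d) :
  f ⊗ g = (idm b ⊗ g) ∘ (f ⊗ idm c).
Proof. rewrite <- tc, comp_id_l, comp_id_r. reflexivity. Qed.

Lemma tswap {C : SymMonCat} {a b c d : C} (f : hom a b) (g : hom c d) :
  (f ⊗ idm d) ∘ (idm a ⊗ g) = (idm b ⊗ g) ∘ (f ⊗ idm c).
Proof. rewrite <- tsl, <- tsr. reflexivity. Qed.

Lemma tid {C : SymMonCat} (a b : C) : idm a ⊗ idm b = idm (a ⊠ b).
Proof. apply tensm_id. Qed.

Lemma assoc_inv_nat {C : SymMonCat} {a b c d e f : C} (x : hom a b) (y : hom c d) (z : hom e f) :
  assoc_inv b d f ∘ ((x ⊗ y) ⊗ z) = (x ⊗ (y ⊗ z)) ∘ assoc_inv a c e.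
Proof.
  rewrite <- (comp_id_r (assoc_inv b d f ∘ _)).
  rewrite <- (assoc_inv_r a c e), !cA.
  rewrite <- (cA _ _ (assoc_inv b d f)), <- assoc_nat, !cA, assoc_inv_l, comp_id_l.
  reflexivity.
Qed.

Lemma lunit_inv_nat {C : SymMonCat} {a b : C} (x : hom a b) :
  lunit_inv b ∘ x = (idm unit ⊗ x) ∘ lunit_inv a.
Proof.
  rewrite <- (comp_id_l (_ ∘ lunit_inv a)), <- (lunit_inv_l b), <- !cA.
  rewrite (cA _ _ (lunit b)), lunit_nat, <- cA, lunit_inv_r, comp_id_r. reflexivity.
Qed.

Lemma runit_inv_nat {C : SymMonCat} {a b : C} (x : hom a b) :
  runit_inv b ∘ x = (x ⊗ idm unit) ∘ runit_inv a.
Proof.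
  rewrite <- (comp_id_l (_ ∘ runit_inv a)), <- (runit_inv_l b), <- !cA.
  rewrite (cA _ _ (runit b)), runit_nat, <- cA, runit_inv_r, comp_id_r. reflexivity.
Qed.

Lemma tm {C : SymMonCat} {a b c d e f : C} (g : hom b c) (g' : hom a b) (h : hom e f) (h' : hom d e) :
  (g ⊗ h) ∘ (g' ⊗ h') = (g ∘ g') ⊗ (h ∘ h').
Proof. symmetry; apply tensm_comp. Qed.

Lemma lc4 {C : SymMonCat} {b c d e f : C} {x : hom e f} {y : hom d e} {u : hom c d} {v : hom b c}
  {z : hom b f} (E : x ∘ y ∘ u ∘ v = z) : forall e0 (w : hom f e0), w ∘ x ∘ y ∘ u ∘ v = w ∘ z.
Proof. intros. rewrite <- E, !cA. reflexivity. Qed.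

Lemma lc5 {C : SymMonCat} {b c d e f g : C} {x : hom f g} {y : hom e f} {u : hom d e} {v : hom c d}
  {t : hom b c} {z : hom b g} (E : x ∘ y ∘ u ∘ v ∘ t = z) :
  forall e0 (w : hom g e0), w ∘ x ∘ y ∘ u ∘ v ∘ t = w ∘ z.
Proof. intros. rewrite <- E, !cA. reflexivity. Qed.

Ltac crw1 H := first [ rewrite H | rewrite (lc2 H) | rewrite (lc3 H) | rewrite (lc4 H) | rewrite (lc5 H) ].
Ltac crwb1 H := first [ rewrite <- H | rewrite <- (lc2 H) | rewrite <- (lc3 H) ].
Tactic Notation "crw" open_constr(H) := crw1 H; rewrite ?cA.
Tactic Notation "crwb" open_constr(H) := crwb1 H; rewrite ?cA.

Lemma tcl {C : SymMonCat} {a b c d : C} (f : hom b c) (g : hom a b) :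
  (f ∘ g) ⊗ idm d = (f ⊗ idm d) ∘ (g ⊗ idm d).
Proof. rewrite <- tc, comp_id_l. reflexivity. Qed.

Lemma tcr {C : SymMonCat} {a b c d : C} (f : hom b c) (g : hom a b) :
  idm d ⊗ (f ∘ g) = (idm d ⊗ f) ∘ (idm d ⊗ g).
Proof. rewrite <- tc, comp_id_l. reflexivity. Qed.

Lemma tpush_l {C : SymMonCat} {a a' b c d : C} (f : hom c d) (g : hom b c) (x : hom a a') :
  (idm a' ⊗ f) ∘ (x ⊗ g) = x ⊗ (f ∘ g).
Proof. rewrite tm, comp_id_l. reflexivity. Qed.

Lemma tsplit_r {C : SymMonCat} {a a' b c d : C} (f : hom c d) (g : hom b c) (x : hom a a') :
  x ⊗ (f ∘ g) = (x ⊗ f) ∘ (idm a ⊗ g).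
Proof. rewrite tm, comp_id_r. reflexivity. Qed.

Lemma tpush_r {C : SymMonCat} {a a' b c d : C} (f : hom c d) (g : hom b c) (x : hom a a') :
  (f ⊗ idm a') ∘ (g ⊗ x) = (f ∘ g) ⊗ x.
Proof. rewrite tm, comp_id_l. reflexivity. Qed.

Lemma tsplit_l {C : SymMonCat} {a a' b c d : C} (f : hom c d) (g : hom b c) (x : hom a a') :
  (f ∘ g) ⊗ x = (f ⊗ x) ∘ (g ⊗ idm a).
Proof. rewrite tm, comp_id_r. reflexivity. Qed.


Lemma cancel_r {C : SymMonCat} {a b c : C} (f g : hom b c) (h : hom a b) (h' : hom b a) :
  h ∘ h' = idm b -> f ∘ h = g ∘ h -> f = g.
Proof.
  intros Hh E. rewrite <- (comp_id_r f), <- (comp_id_r g), <- Hh, !cA, E. reflexivity.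
Qed.

Lemma cancel_l {C : SymMonCat} {a b c : C} (f g : hom a b) (h : hom b c) (h' : hom c b) :
  h' ∘ h = idm b -> h ∘ f = h ∘ g -> f = g.
Proof.
  intros Hh E. rewrite <- (comp_id_l f), <- (comp_id_l g), <- Hh, <- !cA, E. reflexivity.
Qed.

Lemma tens_unit_r_cancel {C : SymMonCat} {a b : C} (f g : hom a b) :
  f ⊗ idm unit = g ⊗ idm unit -> f = g.
Proof.
  intros E.
  rewrite <- (comp_id_r f), <- (comp_id_r g), <- (runit_inv_r a), !cA,
    <- !runit_nat, E. reflexivity.
Qed.

Lemma tens_unit_l_cancel {C : SymMonCat} {a b : C} (f g : hom a b) :
  idm unit ⊗ f = idm unit ⊗ g -> f = g.
Proof.
  intros E.
  rewrite <- (comp_id_r f), <- (comp_id_r g), <- (lunit_inv_r a), !cA,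
    <- !lunit_nat, E. reflexivity.
Qed.

Lemma kelly_r {C : SymMonCat} (a b : C) :
  runit (a ⊠ b) ∘ assoc a b unit = idm a ⊗ runit b.
Proof.
  apply tens_unit_r_cancel.
  assert (P := pentagon a b unit unit). rewrite !cA in P.
  apply (cancel_r _ _ (assoc a (b ⊠ unit) unit ∘ (idm a ⊗ assoc b unit unit))
           ((idm a ⊗ assoc_inv b unit unit) ∘ assoc_inv a (b ⊠ unit) unit)).
  { rewrite !cA. crw (tm _ _ _ _). rewrite assoc_inv_r, comp_id_l, tid, comp_id_r, assoc_inv_r.
    reflexivity. }
  rewrite !cA, tcl.
  crw (eq_sym P).
  crw (triangle _ _).
  rewrite <- (tid a b). crwb (assoc_nat _ _ _).
  rewrite <- (triangle b unit), tcr, !cA.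
  crw (assoc_nat _ _ _). reflexivity.
Qed.


Lemma kelly_l {C : SymMonCat} (a b : C) :
  lunit (a ⊠ b) = (lunit a ⊗ idm b) ∘ assoc unit a b.
Proof.
  apply tens_unit_l_cancel.
  assert (P := pentagon unit unit a b). rewrite !cA in P.
  apply (cancel_l _ _ (assoc unit a b) (assoc_inv unit a b)); [apply assoc_inv_l|].
  rewrite <- (triangle unit (a ⊠ b)), <- (tid a b).
  rewrite !cA, assoc_nat, tcr, !cA.
  crw (assoc_nat _ _ _).
  crw P. crw (tm _ _ _ _). rewrite triangle, comp_id_l. reflexivity.
Qed.

Lemma hex_inv {C : SymMonCat} (x p q : C) :
  assoc_inv p x q ∘ (sym x p ⊗ idm q) ∘ assoc x p q ∘ sym (p ⊠ q) x
  = (idm p ⊗ sym q x) ∘ assoc_inv p q x.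
Proof.
  assert (L : assoc_inv p x q ∘ (sym x p ⊗ idm q) ∘ assoc x p q
              = (idm p ⊗ sym q x) ∘ assoc_inv p q x ∘ sym x (p ⊠ q)).
  { rewrite hexagon, !cA. crw (assoc_inv_l _ _ _). crw (comp_id_r _).
    crw (tm _ _ _ _). rewrite sym_invol, comp_id_l, tid, comp_id_l. reflexivity. }
  rewrite L. crw (sym_invol _ _). rewrite comp_id_r. reflexivity.
Qed.

Lemma pent_inv {C : SymMonCat} (a b c d : C) :
  assoc_inv (a ⊠ b) c d ∘ (assoc a b c ⊗ idm d)
  = assoc a b (c ⊠ d) ∘ (idm a ⊗ assoc_inv b c d) ∘ assoc_inv a (b ⊠ c) d.
Proof.
  assert (P := pentagon a b c d). rewrite !cA in P.
  apply (cancel_l _ _ (assoc (a ⊠ b) c d) (assoc_inv (a ⊠ b) c d)); [apply assoc_inv_l|].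
  rewrite !cA, assoc_inv_r, comp_id_l, P.
  crw (tm _ _ _ _). rewrite comp_id_l, assoc_inv_r, tid. crw (comp_id_r _).
  crw (assoc_inv_r _ _ _). rewrite comp_id_r. reflexivity.
Qed.

Lemma mid_nat {C : SymMonCat} {a b c d a' b' c' d' : C}
  (x : hom a a') (y : hom b b') (z : hom c c') (w : hom d d') :
  mid a' b' c' d' ∘ ((x ⊗ y) ⊗ (z ⊗ w)) = ((x ⊗ z) ⊗ (y ⊗ w)) ∘ mid a b c d.
Proof.
  unfold mid. rewrite !cA.
  crw (assoc_inv_nat _ _ _).
  crw (tpush_l _ _ _). rewrite assoc_nat, tsplit_r, !cA.
  crw (tpush_l _ _ _). rewrite tpush_r, sym_nat, tsplit_l, tsplit_r, !cA.
  crw (tpush_l (assoc_inv _ _ _) _ x). rewrite assoc_inv_nat, tsplit_r, !cA.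
  crw (assoc_nat _ _ _). reflexivity.
Qed.

Lemma SI_gen {C : SymMonCat} (a b c r p s : C) (T : hom (c ⊠ r) (p ⊠ s)) :
  (assoc a b p ⊗ idm s) ∘ assoc a (b ⊠ p) s
  ∘ (idm a ⊗ (assoc b p s ∘ (idm b ⊗ T) ∘ assoc_inv b c r))
  ∘ assoc_inv a (b ⊠ c) r ∘ (assoc_inv a b c ⊗ idm r)
  = assoc (a ⊠ b) p s ∘ (idm (a ⊠ b) ⊗ T) ∘ assoc_inv (a ⊠ b) c r.
Proof.
  rewrite !tcr, !cA.
  assert (P := pentagon a b p s). rewrite !cA in P.
  crw (eq_sym P).
  crw (assoc_nat _ _ _). rewrite tid.
  crw (eq_sym (pent_inv a b c r)).
  crw (tm _ _ _ _). rewrite assoc_inv_r, comp_id_l, tid, comp_id_r. reflexivity.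
Qed.

Lemma mid_T {C : SymMonCat} (a b c d : C) :
  mid a b c d = assoc a c (b ⊠ d)
     ∘ (idm a ⊗ (assoc_inv c b d ∘ (sym b c ⊗ idm d) ∘ assoc b c d)) ∘ assoc_inv a b (c ⊠ d).
Proof. unfold mid. rewrite !tcr, !cA. reflexivity. Qed.

Lemma SI {C : SymMonCat} (a b c p q : C) :
  (assoc a b p ⊗ idm (c ⊠ q)) ∘ assoc a (b ⊠ p) (c ⊠ q) ∘ (idm a ⊗ mid b c p q)
  ∘ assoc_inv a (b ⊠ c) (p ⊠ q) ∘ (assoc_inv a b c ⊗ idm (p ⊠ q)) = mid (a ⊠ b) c p q.
Proof.
  rewrite (mid_T b), (mid_T (a ⊠ b)). apply SI_gen.
Qed.

Lemma M2 {C : SymMonCat} (b c d : C) :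
  (lunit c ⊗ idm (b ⊠ d)) ∘ mid unit b c d ∘ (lunit_inv b ⊗ idm (c ⊠ d))
  = assoc_inv c b d ∘ (sym b c ⊗ idm d) ∘ assoc b c d.
Proof.
  rewrite mid_T, !cA, <- kelly_l, lunit_nat, (kelly_l b).
  rewrite !cA.   crw (assoc_inv_r _ _ _). crw (comp_id_r _). crw (tm _ _ _ _).
  rewrite lunit_inv_r, comp_id_l, tid, comp_id_r. reflexivity.
Qed.

Lemma tri_inv {C : SymMonCat} (x y : C) :
  (idm x ⊗ lunit y) ∘ assoc_inv x unit y = runit x ⊗ idm y.
Proof. rewrite <- triangle, <- cA, assoc_inv_r, comp_id_r. reflexivity. Qed.

Lemma kelly_r_inv {C : SymMonCat} (a b : C) :
  assoc a b unit ∘ (idm a ⊗ runit_inv b) = runit_inv (a ⊠ b).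
Proof.
  apply (cancel_l _ _ (runit (a ⊠ b)) (runit_inv (a ⊠ b))); [apply runit_inv_l|].
  rewrite cA, kelly_r, tm, comp_id_l, !runit_inv_r, tid. reflexivity.
Qed.

Lemma tri_inv_b {C : SymMonCat} (x y : C) :
  (runit x ⊗ idm y) ∘ assoc x unit y = idm x ⊗ lunit y.
Proof. apply triangle. Qed.


Section H.
Context {C : SymMonCat} (A : C) (mu : hom (A ⊠ A) A) (eta : hom unit A)
  (Delta : hom A (A ⊠ A)) (eps : hom A unit) (S : hom A A)
  (HH : IsHopfAlgebra A mu eta Delta eps S).

Lemma COl : (idm A ⊗ Delta) ∘ Delta = assoc_inv A A A ∘ (Delta ⊗ idm A) ∘ Delta.
Proof. rewrite <- cA, <- (hopf_coassoc _ _ _ _ _ _ HH), !cA, assoc_inv_l, comp_id_l. reflexivity. Qed.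

Lemma CUl : (eps ⊗ idm A) ∘ Delta = lunit_inv A.
Proof.
  rewrite <- (comp_id_l (eps ⊗ idm A ∘ Delta)), <- (lunit_inv_l A), <- !cA.
  rewrite (cA _ _ (lunit A)), (hopf_counit_l _ _ _ _ _ _ HH), comp_id_r. reflexivity.
Qed.

Lemma G1 (Y : C) :
  (mu ⊗ idm Y) ∘ assoc A A Y ∘ (idm A ⊗ (mu ⊗ idm Y))
  = ((mu ∘ (mu ⊗ idm A)) ⊗ idm Y) ∘ (assoc A A A ⊗ idm Y) ∘ assoc A (A ⊠ A) Y.
Proof.
  crw (assoc_nat _ _ _). crw (tm _ _ _ _). rewrite !comp_id_l.
  rewrite <- (tcl (mu ∘ (mu ⊗ idm A)) (assoc A A A)), (hopf_mul_assoc _ _ _ _ _ _ HH).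
  reflexivity.
Qed.
Lemma Glem :
  (mu ⊗ idm A) ∘ assoc A A A ∘ (S ⊗ ((mu ⊗ mu) ∘ mid A A A A ∘ (Delta ⊗ idm (A ⊠ A))))
  ∘ assoc_inv A A (A ⊠ A) ∘ (Delta ⊗ idm (A ⊠ A))
  = (idm A ⊗ mu) ∘ assoc_inv A A A ∘ (sym A A ⊗ idm A) ∘ assoc A A A.
Proof.
  rewrite (tsl S), (tsl mu mu), !tcr, !cA.
  repeat crw (tswap S _).

  crw (G1 A).
  crw (assoc_nat (idm A) (idm (A ⊠ A)) mu).
  crw (tm (assoc A A A) _ (idm A) mu). rewrite tid, comp_id_r, comp_id_l.
  rewrite (tsr (assoc A A A) mu). rewrite !cA.
  crw (tm (mu ∘ (mu ⊗ idm A)) (idm _) (idm A) mu). rewrite comp_id_r, comp_id_l.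
  rewrite <- (tid A (A ⊠ A)).   crw (eq_sym (assoc_inv_nat S (idm A) (idm (A ⊠ A)))).
  crw (tm (S ⊗ idm A) Delta (idm (A ⊠ A)) (idm (A ⊠ A))). rewrite comp_id_l.
  crw (eq_sym (assoc_inv_nat (idm A) Delta (idm (A ⊠ A)))).
  crw (tm (idm A ⊗ Delta) _ (idm (A ⊠ A)) (idm (A ⊠ A))). rewrite comp_id_l.
  rewrite <- tswap.
  assert (CO : (idm A ⊗ Delta) ∘ Delta = assoc_inv A A A ∘ (Delta ⊗ idm A) ∘ Delta).
  { rewrite <- cA, <- (hopf_coassoc _ _ _ _ _ _ HH), !cA, assoc_inv_l, comp_id_l. reflexivity. }
  crw CO. rewrite <- (tid A A), (eq_sym (assoc_inv_nat S (idm A) (idm A))), tid.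
  rewrite !tcl, !cA. crw (SI A A A A A).
  crw (tm ((S ⊗ idm A) ⊗ idm A) (Delta ⊗ idm A) (idm (A ⊠ A)) (idm (A ⊠ A))).
  rewrite comp_id_l, tm, comp_id_l.
  rewrite <- (tid A A).
  crw (mid_nat (S ⊗ idm A ∘ Delta) (idm A) (idm A) (idm A)).
  crw (tm (mu ∘ (mu ⊗ idm A)) _ mu _). rewrite tid, comp_id_r.
  crw (tm mu _ (idm A) (idm A)). rewrite comp_id_l, (hopf_antipode_l _ _ _ _ _ _ HH).
  rewrite tcl, cA, (hopf_unit_l _ _ _ _ _ _ HH), tsr, tcl, !cA.
  rewrite <- (tid A A).
  crw (eq_sym (mid_nat eps (idm A) (idm A) (idm A))).
  crw (tm (eps ⊗ idm A) Delta (idm A ⊗ idm A) (idm A ⊗ idm A)).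
  assert (CU : (eps ⊗ idm A) ∘ Delta = lunit_inv A).
  { rewrite <- (comp_id_l (eps ⊗ idm A ∘ Delta)), <- (lunit_inv_l A), <- !cA.
    rewrite (cA _ _ (lunit A)), (hopf_counit_l _ _ _ _ _ _ HH), comp_id_r. reflexivity. }
  rewrite CU, !tid, comp_id_l.
  crw (M2 A A A). reflexivity.
Qed.

Context (I : C) (Lam : hom I A) (HL : mu ∘ (idm A ⊗ Lam) = lunit A ∘ (eps ⊗ Lam)).

Lemma Elem : (mu ⊗ mu) ∘ mid A A A A ∘ (Delta ⊗ (Delta ∘ Lam)) = lunit (A ⊠ A) ∘ (eps ⊗ (Delta ∘ Lam)).
Proof.
  replace (Delta ⊗ (Delta ∘ Lam)) with ((Delta ⊗ Delta) ∘ (idm A ⊗ Lam))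
    by (rewrite <- tc, comp_id_r; reflexivity).
  rewrite !cA, <- (hopf_bialg _ _ _ _ _ _ HH).
  rewrite <- cA, HL, cA, <- lunit_nat, <- cA, tm, comp_id_l. reflexivity.
Qed.

Lemma L1a :
  (idm A ⊗ mu) ∘ assoc_inv A A A ∘ (sym A A ⊗ idm A) ∘ assoc A A A ∘ (idm A ⊗ (Delta ∘ Lam))
  = (mu ⊗ idm A) ∘ assoc A A A ∘ (S ⊗ (Delta ∘ Lam)).
Proof.
  rewrite <- Glem.
  rewrite tsl. crw (tswap Delta (Delta ∘ Lam)). rewrite !tid, !comp_id_r.
  rewrite <- (tid A A) at 2.
  crw (assoc_inv_nat (idm A) (idm A) (Delta ∘ Lam)).
  crw (tm S (idm A) _ _). rewrite comp_id_r. crw (tm Delta (idm A) _ _). rewrite comp_id_r, comp_id_l. crw Elem.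
  rewrite (tsr eps), (cA (eps ⊗ idm I) _ (lunit (A ⊠ A))), lunit_nat, !tsplit_r, !cA.
  crw (eq_sym (assoc_inv_nat (idm A) eps (idm I))).
  crw (tri_inv A I). crw (tm (runit A) _ (idm I) _).
  rewrite !comp_id_l. crw (tm _ Delta _ _). rewrite comp_id_l, (hopf_counit_r _ _ _ _ _ _ HH), tid, comp_id_r. reflexivity.
Qed.

Context (lam : hom A I) (HR : (lam ⊗ idm A) ∘ Delta = (lam ⊗ eta) ∘ runit_inv A).

Definition w := (idm A ⊗ lam) ∘ Delta.

Lemma w_coint : (w ⊗ idm A) ∘ Delta = (w ⊗ eta) ∘ runit_inv A.
Proof.
  unfold w. rewrite tcl, <- cA, <- (hopf_coassoc _ _ _ _ _ _ HH), !cA.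
  crw (eq_sym (assoc_nat (idm A) lam (idm A))).
  crw (tm (idm A) (idm A) (lam ⊗ idm A) Delta). rewrite comp_id_l, HR.
  rewrite tsplit_r, !cA.
  crw (assoc_nat (idm A) lam eta). crw (kelly_r_inv A A).
  rewrite (tsr (idm A ⊗ lam) eta), (tsr (idm A ⊗ lam ∘ Delta) eta), ?cA. crw (eq_sym (runit_inv_nat (idm A ⊗ lam))).
  crw (eq_sym (runit_inv_nat (idm A ⊗ lam ∘ Delta))). reflexivity.
Qed.

Context (HU : forall (X : C) (f : hom A X), (f ⊗ idm A) ∘ Delta = (f ⊗ eta) ∘ runit_inv A ->
                exists! g : hom I X, f = g ∘ lam).

Lemma lam_epi (X : C) (g g' : hom I X) : g ∘ lam = g' ∘ lam -> g = g'.
Proof.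
  intros E.
  assert (Hc : ((g ∘ lam) ⊗ idm A) ∘ Delta = ((g ∘ lam) ⊗ eta) ∘ runit_inv A).
  { rewrite tcl, <- cA, HR, cA, tm, comp_id_l. reflexivity. }
  destruct (HU X (g ∘ lam) Hc) as [g0 [H0 H1]].
  rewrite <- (H1 g eq_refl), <- (H1 g' E). reflexivity.
Qed.

Lemma gamma_ex : exists gam : hom I (A ⊠ I), w = gam ∘ lam.
Proof. destruct (HU _ w w_coint) as [g [Hg _]]. exists g. exact Hg. Qed.

Definition act {X Y : C} (f : hom X (A ⊠ Y)) : hom (A ⊠ X) (A ⊠ Y) :=
  (mu ⊗ idm Y) ∘ assoc A A Y ∘ (idm A ⊗ f).

Context (gam : hom I (A ⊠ I)) (Hg : w = gam ∘ lam).

Lemma Z_two : act gam ∘ (S ⊗ idm I) ∘ gam ∘ lam = (eta ⊗ idm I) ∘ lunit_inv I ∘ lam.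
Proof.
  transitivity ((mu ⊗ idm I) ∘ assoc A A I ∘ (S ⊗ w) ∘ Delta).
  { unfold act. rewrite <- !cA. f_equal. rewrite !cA.
    rewrite Hg, (tsr S (gam ∘ lam)), tcr, !cA. crw (eq_sym (tswap S lam)). crw (Hg : (idm A ⊗ lam) ∘ Delta = gam ∘ lam). reflexivity. }
  unfold w. rewrite tsplit_r, !cA. crw COl.
  crw (assoc_nat S (idm A) lam). crw (assoc_inv_r A A A). crw (comp_id_r _).
  crw (tm mu (S ⊗ idm A) (idm I) lam). crw (tm _ Delta _ (idm A)).
  rewrite !comp_id_l, comp_id_r, (hopf_antipode_l _ _ _ _ _ _ HH).
  replace ((eta ∘ eps) ⊗ lam) with ((eta ⊗ idm I) ∘ (eps ⊗ lam)) by (rewrite <- tc, comp_id_l; reflexivity).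
  rewrite (tsr eps lam), !cA. crw CUl.
  crw (eq_sym (lunit_inv_nat lam)). reflexivity.
Qed.

Lemma DG : act gam ∘ (S ⊗ idm I) ∘ gam = (eta ⊗ idm I) ∘ lunit_inv I.
Proof. apply lam_epi. rewrite Z_two. reflexivity. Qed.

Lemma act_comp {X Y Z : C} (t : hom Y (A ⊠ Z)) (s : hom X (A ⊠ Y)) :
  act t ∘ act s = act (act t ∘ s).
Proof.
  unfold act. rewrite !tcr, !cA.
  crw (eq_sym (tswap mu t)).
  rewrite <- (tid A Z). crw (assoc_nat mu (idm A) (idm Z)).
  crw (tm mu (mu ⊗ idm A) (idm Z) (idm Z)). rewrite comp_id_l.
  rewrite <- (tid A A) at 1. crw (eq_sym (assoc_nat (idm A) (idm A) t)).
  assert (P := pentagon A A A Z). rewrite !cA in P. crw P.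
  crw (tm (mu ∘ (mu ⊗ idm A)) (assoc A A A) (idm Z) (idm Z)).
  rewrite comp_id_l, (hopf_mul_assoc _ _ _ _ _ _ HH), tcl, ?cA.
  crw (eq_sym (assoc_nat (idm A) mu (idm Z))). reflexivity.
Qed.

Lemma act_unit : act ((eta ⊗ idm I) ∘ lunit_inv I) = idm (A ⊠ I).
Proof.
  unfold act. rewrite tcr, !cA. crw (assoc_nat (idm A) eta (idm I)).
  crw (tm mu (idm A ⊗ eta) (idm I) (idm I)).
  rewrite comp_id_l, (hopf_unit_r _ _ _ _ _ _ HH).
  rewrite tri_inv_b, tm, lunit_inv_r, !comp_id_l, tid. reflexivity.
Qed.

Context (Hll : lam ∘ Lam = idm I) (HS2 : S ∘ S = idm A).

Lemma gam_eq : gam = (idm A ⊗ lam) ∘ Delta ∘ Lam.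
Proof. fold w. rewrite Hg, <- cA, Hll, comp_id_r. reflexivity. Qed.

Lemma act_gam : act gam = (idm A ⊗ lam) ∘ (mu ⊗ idm A) ∘ assoc A A A ∘ (idm A ⊗ (Delta ∘ Lam)).
Proof.
  unfold act. rewrite gam_eq, !tcr, !cA.
  crw (assoc_nat (idm A) (idm A) lam). rewrite tid.
  crw (tswap mu lam). reflexivity.
Qed.

Lemma N_id :
  (idm A ⊗ (lam ∘ mu ∘ (S ⊗ idm A))) ∘ (idm A ⊗ sym A A) ∘ assoc_inv A A A
    ∘ ((Delta ∘ Lam) ⊗ idm A) = act gam ∘ sym I A.
Proof.
  rewrite act_gam.
  assert (E : (mu ⊗ idm A) ∘ assoc A A A ∘ (idm A ⊗ (Delta ∘ Lam))
            = (mu ⊗ idm A) ∘ assoc A A A ∘ (S ⊗ (Delta ∘ Lam)) ∘ (S ⊗ idm I)).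
  { crw (tm S S (Delta ∘ Lam) (idm I)). rewrite HS2, comp_id_r. reflexivity. }
  crw E. crw (eq_sym L1a).
  crw (eq_sym (tswap S (Delta ∘ Lam))). rewrite <- (tid A A).
  crw (assoc_nat S (idm A) (idm A)).
  crw (tm (sym A A) (S ⊗ idm A) (idm A) (idm A)). rewrite sym_nat, comp_id_l, (tcl (idm A ⊗ S) (sym A A)), ?cA.
  crw (assoc_inv_nat (idm A) S (idm A)).
  crw (eq_sym (sym_nat (Delta ∘ Lam) (idm A))).
  crw (hex_inv A A A).
  rewrite !tcr, ?cA. reflexivity.
Qed.

Definition phi := lam ∘ mu ∘ (S ⊗ idm A).

Definition Qf (f : hom (A ⊠ I) (I ⊠ A)) : hom ((A ⊠ I) ⊠ A) (I ⊠ I) :=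
  (idm I ⊗ phi) ∘ (idm I ⊗ sym A A) ∘ assoc_inv I A A ∘ (f ⊗ idm A).

Definition Bm : hom ((A ⊠ A) ⊠ I) ((A ⊠ I) ⊠ A) :=
  assoc A I A ∘ (idm A ⊗ sym A I) ∘ (idm A ⊗ act ((S ⊗ idm I) ∘ gam)) ∘ assoc_inv A A I.

Lemma Kp :
  (idm (A ⊠ A) ⊗ phi) ∘ (idm (A ⊠ A) ⊗ sym A A) ∘ assoc_inv (A ⊠ A) A A
    ∘ (assoc A A A ⊗ idm A) ∘ ((idm A ⊗ (Delta ∘ Lam)) ⊗ idm A)
  = assoc A A I ∘ (idm A ⊗ ((idm A ⊗ phi) ∘ (idm A ⊗ sym A A) ∘ assoc_inv A A A
      ∘ ((Delta ∘ Lam) ⊗ idm A))) ∘ assoc_inv A I A.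
Proof.
  crw (pent_inv A A A A).
  crw (assoc_inv_nat (idm A) (Delta ∘ Lam) (idm A)).
  rewrite <- (tid A A). crw (eq_sym (assoc_nat (idm A) (idm A) (sym A A))).
  crw (eq_sym (assoc_nat (idm A) (idm A) phi)).
  rewrite !tcr, ?cA. reflexivity.
Qed.

Lemma recon (e : hom (A ⊠ A) I) : Qf (Psi Delta Lam e) ∘ Bm = e ⊗ idm I.
Proof.
  unfold Qf, Psi. rewrite tcl, tcl, ?cA.
  crw (assoc_inv_nat e (idm A) (idm A)). rewrite tid.
  crw (eq_sym (tswap e (sym A A))). crw (eq_sym (tswap e phi)).
  crw Kp. unfold phi. rewrite N_id. unfold Bm. rewrite ?cA.
  crw (assoc_inv_l A I A). crw (comp_id_r _).
  crw (tm (idm A) (idm A) (act gam ∘ sym I A) (sym A I)). crw (sym_invol _ _). rewrite comp_id_r.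
rewrite !comp_id_r.   crw (tm (idm A) (idm A) (act gam) _). rewrite act_comp, ?cA, DG, act_unit.
  rewrite !comp_id_l, tid, comp_id_r. crw (assoc_inv_r A A I). rewrite comp_id_r. reflexivity.
Qed.
End H.


Lemma tens_I_cancel {C : SymMonCat} {X : C} (I : C) (e1 e2 : hom X I) :
  invertible_ob I -> e1 ⊗ idm I = e2 ⊗ idm I -> e1 = e2.
Proof.
  intros [J [f [g [Hfg Hgf]]]] E.
  assert (E2 : e1 ⊗ idm (I ⊠ J) = e2 ⊗ idm (I ⊠ J)).
  { rewrite <- !tid.
    rewrite <- (comp_id_l (e1 ⊗ (idm I ⊗ idm J))), <- (assoc_inv_l I I J), <- cA, assoc_nat.
    rewrite <- (comp_id_l (e2 ⊗ (idm I ⊗ idm J))), <- (assoc_inv_l I I J), <- (cA _ _ (assoc_inv I I J)), assoc_nat.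
    rewrite E. reflexivity. }
  apply tens_unit_r_cancel.
  assert (K : forall e : hom X I, e ⊗ (f ∘ g) = (idm I ⊗ f) ∘ (e ⊗ idm (I ⊠ J)) ∘ (idm X ⊗ g)).
  { intros. rewrite !tm, comp_id_l, comp_id_r, comp_id_r. reflexivity. }
  rewrite <- Hfg, !K, E2. reflexivity.
Qed.

Theorem mainTheorem6 (C : SymMonCat) (A : C) (mu : hom (A ⊠ A) A)
    (eta : hom unit A) (Delta : hom A (A ⊠ A)) (eps : hom A unit)
    (S : hom A A) (I : C) (Lam : hom I A) (lam : hom A I) :
  IsHopfAlgebra A mu eta Delta eps S ->
  (exists S' : hom A A, S' ∘ S = idm A /\ S ∘ S' = idm A) ->
  S ∘ S = idm A ->
  invertible_ob I ->
  universal_left_integral mu eps Lam ->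
  universal_right_cointegral Delta eta lam ->
  lam ∘ Lam = idm I ->
  forall e1 e2 : hom (A ⊠ A) I, Psi Delta Lam e1 = Psi Delta Lam e2 -> e1 = e2.
Proof.
  intros HH _ HS2 HI [HL _] [HR HU] Hll e1 e2 HP.
  destruct (gamma_ex A mu eta Delta eps S HH I lam HR HU) as [gam Hg].
  apply (tens_I_cancel I e1 e2 HI).
  rewrite <- (recon A mu eta Delta eps S HH I Lam HL lam HR HU gam Hg Hll HS2 e1).
  rewrite <- (recon A mu eta Delta eps S HH I Lam HL lam HR HU gam Hg Hll HS2 e2).
  rewrite HP. reflexivity.
Qed.
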